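(* Let $f=\frac1n\sum_{i=1}^n f_i$ where each $f_i:\mathbb{R}^d\to\mathbb{R}$ is $L$-smooth, and assume moreover that either each $f_i$ is $\mu$-strongly convex for some $\mu>0$, or $\inf_x f(x)>-\infty$. Then the iterates of No Full Grad SARAH (described in the context) satisfy, for every epoch $s$, $$\Big\|\nabla f(x_s^0)-\frac1{n+1}\sum_{t=0}^{n}v_s^t\Big\|^2\le 2\|\nabla f(x_s^0)-v_s\|^2+\frac{2L^2}{n+1}\sum_{t=1}^{n}\|x_s^t-x_s^{t-1}\|^2.$$
   Context: No Full Grad SARAH: input $x_0^0\in\mathbb{R}^d$, $v_0=0$, stepsize $\gamma>0$. For epochs $s=0,1,\dots$: choose a permutation $\pi_s^1,\dots,\pi_s^n$ of $\{1,\dots,n\}$ (by any shuffling rule); set $\tilde v_s^1=0$, $v_s^0=v_s$, $x_s^1=x_s^0-\gamma v_s^0$; for $t=1,\dots,n$ set $\tilde v_s^{t+1}=\frac{t-1}{t}\tilde v_s^t+\frac1t\nabla f_{\pi_s^t}(x_s^t)$, $v_s^t=\frac1n\big(\nabla f_{\pi_s^t}(x_s^t)-\nabla f_{\pi_s^t}(x_s^{t-1})\big)+v_s^{t-1}$, $x_s^{t+1}=x_s^t-\gamma v_s^t$; then $x_{s+1}^0=x_s^{n+1}$, $v_{s+1}=\tilde v_s^{n+1}$. *)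

(* Defs.v *)
From HB Require Import structures.
From mathcomp Require Import all_boot all_order all_algebra all_fingroup.
From mathcomp Require Import all_classical all_reals all_analysis.
Set Implicit Arguments. Unset Strict Implicit. Unset Printing Implicit Defensive.
Import Order.TTheory GRing.Theory Num.Theory.
Import numFieldNormedType.Exports.
Local Open Scope ring_scope.

Section Defs.
Variables (R : realType) (d : nat).
Notation V := 'rV[R]_d.

(* Euclidean inner product and Euclidean norm on R^d
   (the library norm on matrices is the sup norm, so we use these explicitly) *)
Definition dotv (u v : V) : R := \sum_(j < d) u 0 j * v 0 j.
Definition enorm (u : V) : R := Num.sqrt (dotv u u).

Definition is_gradient (f : V -> R) (g : V -> V) : Prop :=
  forall x, differentiable f x /\ forall h : V, 'd f x h = dotv (g x) h.

Definition L_smooth (L : R) (f : V -> R) (g : V -> V) : Prop :=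
  is_gradient f g /\ forall x y, enorm (g x - g y) <= L * enorm (x - y).

Definition strongly_convex (mu : R) (f : V -> R) : Prop :=
  forall (x y : V) (a : R), 0 <= a <= 1 ->
    f (a *: x + (1 - a) *: y) <=
      a * f x + (1 - a) * f y - mu / 2 * a * (1 - a) * enorm (x - y) ^+ 2.

Variables (n : nat) (g : 'I_n -> V -> V) (gamma : R).

(* gradient of f_{pi^t} at x for the step t in 1..n of an epoch with permutation p
   (pi^t = p (t-1)); unused (zero) outside 1..n *)
Definition gstep (p : 'S_n) (t : nat) (x : V) : V :=
  match insub t.-1 with Some i => g (p i) x | None => 0 end.

(* inner loop of an epoch started at x_s^0 = x0 with v_s = vs:
   inner t = (x_s^t, x_s^{t+1}, v_s^t) *)
Fixpoint inner (p : 'S_n) (x0 vs : V) (t : nat) : V * V * V :=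
  match t with
  | 0 => (x0, x0 - gamma *: vs, vs)
  | t'.+1 =>
      let: (a, b, v) := inner p x0 vs t' in
      let v' := (n%:R)^-1 *: (gstep p t b - gstep p t a) + v in
      (b, b - gamma *: v', v')
  end.

Definition xin p x0 vs t : V := (inner p x0 vs t).1.1.
Definition vin p x0 vs t : V := (inner p x0 vs t).2.

Fixpoint tv (p : 'S_n) (x0 vs : V) (t : nat) : V :=
  match t with
  | 0 => 0
  | 1 => 0
  | (S k as t').+1 =>
      ((k%:R) / (t'%:R)) *: tv p x0 vs t' + (t'%:R)^-1 *: gstep p t' (xin p x0 vs t')
  end.

(* epoch s returns (x_s^0, v_s); v_0 = 0 *)
Fixpoint epoch (pi : nat -> 'S_n) (x00 : V) (s : nat) : V * V :=
  match s with
  | 0 => (x00, 0)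
  | s'.+1 =>
      let: (x0, vs) := epoch pi x00 s' in
      (xin (pi s') x0 vs n.+1, tv (pi s') x0 vs n.+1)
  end.

Definition sarah_x pi x00 s t : V :=
  xin (pi s) (epoch pi x00 s).1 (epoch pi x00 s).2 t.
Definition sarah_v pi x00 s t : V :=
  vin (pi s) (epoch pi x00 s).1 (epoch pi x00 s).2 t.
Definition sarah_vs pi x00 s : V := (epoch pi x00 s).2.

End Defs.

(* Main.v *)
Set Warnings "-all".
Require Import Defs.
From HB Require Import structures.
From mathcomp Require Import all_boot all_order all_algebra all_fingroup.
From mathcomp Require Import all_classical all_reals all_analysis.
From mathcomp Require Import ring lra.
Import Order.TTheory GRing.Theory Num.Theory.
Import numFieldNormedType.Exports.
Local Open Scope ring_scope.
Set Implicit Arguments. Unset Strict Implicit.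

Section H.
Variable R : realType.

Lemma cs_w (m : nat) (w y : 'I_m -> R) : (forall k, 0 <= w k) ->
  (\sum_k w k * y k)^+2 <= (\sum_k w k) * (\sum_k w k * y k ^+ 2).
Proof.
move=> w0.
have A : \sum_k \sum_l w k * w l * y k ^+ 2 = (\sum_k w k) * (\sum_k w k * y k ^+ 2).
  rewrite mulrC mulr_suml; apply: eq_bigr => k _; rewrite mulr_sumr.
  by apply: eq_bigr => l _; ring.
have B : \sum_k \sum_l w k * w l * y l ^+ 2 = (\sum_k w k) * (\sum_k w k * y k ^+ 2).
  rewrite mulr_suml; apply: eq_bigr => k _; rewrite mulr_sumr.
  by apply: eq_bigr => l _; ring.
have C : \sum_k \sum_l w k * w l * (y k * y l) = (\sum_k w k * y k) ^+ 2.
  rewrite expr2 mulr_suml; apply: eq_bigr => k _; rewrite mulr_sumr.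
  by apply: eq_bigr => l _; ring.
have P : 0 <= \sum_k \sum_l w k * w l * (y k - y l) ^+ 2.
  apply: sumr_ge0 => k _; apply: sumr_ge0 => l _.
  by rewrite mulr_ge0 ?sqr_ge0 // mulr_ge0.
have E : \sum_k \sum_l w k * w l * (y k - y l) ^+ 2 =
   \sum_k \sum_l w k * w l * y k ^+ 2 + \sum_k \sum_l w k * w l * y l ^+ 2
   - (\sum_k \sum_l w k * w l * (y k * y l)) *+ 2.
  rewrite -big_split -sumrMnl -sumrB /=; apply: eq_bigr => k _.
  rewrite -big_split -sumrMnl -sumrB /=; apply: eq_bigr => l _.
  ring.
move: P; rewrite E A B C; lra.
Qed.

Definition sq {d} (u : 'rV[R]_d) := \sum_(j < d) u 0 j ^+ 2.

Lemma enorm_sq d (u : 'rV[R]_d) : enorm u ^+ 2 = sq u.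
Proof.
rewrite /enorm sqr_sqrtr /dotv; first by apply: eq_bigr => j _; rewrite expr2.
by apply: sumr_ge0 => j _; rewrite -expr2 sqr_ge0.
Qed.

Lemma sq_ge0 d (u : 'rV[R]_d) : 0 <= sq u.
Proof. by apply: sumr_ge0 => j _; rewrite sqr_ge0. Qed.

Lemma sq_sub d (a b : 'rV[R]_d) : sq (a - b) <= 2 * sq a + 2 * sq b.
Proof.
rewrite /sq !mulr_sumr -big_split /=; apply: ler_sum => j _.
rewrite !mxE; set p := a 0 j; set q := b 0 j.
have := sqr_ge0 (p + q); nra.
Qed.

Lemma sq_jensen d (m : nat) (w : 'I_m -> R) (y : 'I_m -> 'rV[R]_d) :
  (forall k, 0 <= w k) ->
  sq (\sum_k w k *: y k) <= (\sum_k w k) * (\sum_k w k * sq (y k)).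
Proof.
move=> w0; rewrite /sq.
under eq_bigr => j _ do rewrite summxE.
under [X in _ <= _ * X]eq_bigr => k _ do rewrite mulr_sumr.
rewrite (exchange_big _ _ _ _ _ (fun k j => w k * y k 0 j ^+ 2)) mulr_sumr.
apply: ler_sum => j _.
rewrite /=; under eq_bigr => k _ do rewrite !mxE.
exact: cs_w.
Qed.


Section S.
Variables (d n : nat) (g : 'I_n -> 'rV[R]_d -> 'rV[R]_d) (gamma : R) (p : 'S_n) (x0 vs : 'rV[R]_d).
Local Notation X := (xin g gamma p x0 vs).
Local Notation Vv := (vin g gamma p x0 vs).
Definition D k := gstep g p k.+1 (X k.+1) - gstep g p k.+1 (X k).
Arguments D : simpl never.

Lemma xin_S t : X t.+1 = (inner g gamma p x0 vs t).1.2.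
Proof. by rewrite /xin /=; case: inner => [[a b] v]. Qed.

Lemma vin_S t : Vv t.+1 = (n%:R)^-1 *: D t + Vv t.
Proof.
rewrite /D xin_S /vin /xin /=; by case: (inner _ _ _ _ _ t) => [[a b] v].
Qed.

Lemma vin_sum t : Vv t = vs + (n%:R)^-1 *: \sum_(k < t) D k.
Proof.
elim: t => [|t IH]; first by rewrite big_ord0 scaler0 addr0.
rewrite vin_S IH big_ord_recr /= [in RHS]scalerDr.
by rewrite addrC -addrA [X in vs + X]addrC.
Qed.

Lemma double_sum N : \sum_(t < N.+1) \sum_(k < t) D k = \sum_(k < N) (N - k)%:R *: D k.
Proof.
elim: N => [|N IH]; first by rewrite big_ord_recr /= !big_ord0 addr0.
rewrite big_ord_recr /= IH [in RHS]big_ord_recr /=.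
rewrite [\sum_(k < N.+1) D k]big_ord_recr /= subSnn scale1r addrA -big_split /=.
congr (_ + _); apply: eq_bigr => k _.
by rewrite subSn ?(ltnW (ltn_ord k)) // -natr1 scalerDl scale1r.
Qed.

Lemma D_bound L : (forall i, forall a b, enorm (g i a - g i b) <= L * enorm (a - b)) ->
  forall k, sq (D k) <= L ^+ 2 * sq (X k.+1 - X k).
Proof.
move=> HL k; rewrite /D /gstep /=.
case: insubP => [i _ _|_].
  rewrite -!enorm_sq; have := HL (p i) (X k.+1) (X k).
  have : 0 <= enorm (g (p i) (X k.+1) - g (p i) (X k)) by exact: sqrtr_ge0.
  set e1 := enorm _; set e2 := enorm _; nra.
rewrite subrr; have -> : sq (0 : 'rV[R]_d) = 0.
  by rewrite /sq big1 // => j _; rewrite mxE expr0n.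
by rewrite mulr_ge0 ?sqr_ge0 ?sq_ge0.
Qed.

End S.
End H.
Unset Implicit Arguments.

Theorem lemma3 (R : realType) (d n : nat) (f : 'I_n -> 'rV[R]_d -> R)
  (g : 'I_n -> 'rV[R]_d -> 'rV[R]_d) (gradF : 'rV[R]_d -> 'rV[R]_d)
  (L mu gamma : R) (x00 : 'rV[R]_d) (pi : nat -> 'S_n) :
  (0 < n)%N ->
  (forall i, L_smooth L (f i) (g i)) ->
  ((0 < mu /\ forall i, strongly_convex mu (f i)) \/
   (exists m : R, forall x, m <= (n%:R)^-1 * \sum_(i < n) f i x)) ->
  is_gradient (fun x => (n%:R)^-1 * \sum_(i < n) f i x) gradF ->
  0 < gamma ->
  forall s : nat,
    let x := sarah_x g gamma pi x00 s in
    let v := sarah_v g gamma pi x00 s in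
    enorm (gradF (x 0%N) - (n.+1%:R)^-1 *: \sum_(t < n.+1) v t) ^+ 2 <=
      2 * enorm (gradF (x 0%N) - sarah_vs g gamma pi x00 s) ^+ 2
      + 2 * L ^+ 2 / (n.+1%:R) * \sum_(1 <= t < n.+1) enorm (x t - x t.-1) ^+ 2.
Proof.
move=> n0 Hs _ _ _ s; cbv zeta.
have HL : forall i a b, enorm (g i a - g i b) <= L * enorm (a - b).
  by move=> i a b; case: (Hs i) => _ ->.
rewrite /sarah_x /sarah_v /sarah_vs.
set p := pi s; set x0 := (epoch g gamma pi x00 s).1; set vs := (epoch g gamma pi x00 s).2.
set X := xin g gamma p x0 vs.
set Dk := D g gamma p x0 vs.
have Hsum : \sum_(t < n.+1) vin g gamma p x0 vs t
    = vs *+ n.+1 + (n%:R)^-1 *: \sum_(k < n) (n - k)%:R *: Dk k.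
  under eq_bigr do rewrite vin_sum.
  by rewrite big_split /= sumr_const card_ord -scaler_sumr double_sum.
have n0' : (n%:R : R) != 0 by rewrite pnatr_eq0 -lt0n.
have n1' : (n.+1%:R : R) != 0 by rewrite pnatr_eq0.
pose w k := (n.+1%:R : R)^-1 * (n%:R)^-1 * (n - k)%:R.
have Hdiff : gradF (X 0%N) - (n.+1%:R)^-1 *: \sum_(t < n.+1) vin g gamma p x0 vs t
   = (gradF (X 0%N) - vs) - \sum_(k < n) w (nat_of_ord k) *: Dk k.
  rewrite Hsum scalerDr -[vs *+ n.+1]scaler_nat scalerA.
 rewrite mulVf // scale1r scalerA scaler_sumr.
  rewrite opprD addrA; congr (_ - _); apply: eq_bigr => k _; by rewrite scalerA.
have w0 : forall k : 'I_n, 0 <= w k.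
  by move=> k; rewrite /w !mulr_ge0 // invr_ge0 ler0n.
have wle : forall k : 'I_n, w k <= (n.+1%:R)^-1.
  move=> k; rewrite /w -mulrA -[Y in _ <= Y]mulr1; apply: ler_wpM2l.
    by rewrite invr_ge0 ler0n.
  rewrite -[Y in _ <= Y](mulVf n0'); apply: ler_wpM2l; first by rewrite invr_ge0 ler0n.
  by rewrite ler_nat leq_subr.
have wsum : \sum_(k < n) w k <= 1.
  apply: (@le_trans _ _ (\sum_(k < n) (n.+1%:R : R)^-1)); first by apply: ler_sum => k _.
  rewrite sumr_const card_ord -[_^-1 *+ n]mulr_natl ler_pdivrMr ?ltr0Sn // mul1r ler_nat.
  exact: leqnSn.
have Hb : sq (\sum_(k < n) w k *: Dk k)
    <= (n.+1%:R)^-1 * \sum_(k < n) L ^+ 2 * sq (X k.+1 - X k).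
  apply: (le_trans (@sq_jensen _ _ _ _ Dk w0)).
  have S0 : 0 <= \sum_(k < n) w k * sq (Dk k).
    by apply: sumr_ge0 => k _; rewrite mulr_ge0 ?sq_ge0.
  apply: (@le_trans _ _ (\sum_(k < n) w k * sq (Dk k))).
    by rewrite -[Y in _ <= Y]mul1r; apply: ler_wpM2r.
  rewrite mulr_sumr; apply: ler_sum => k _.
  apply: (@le_trans _ _ ((n.+1%:R)^-1 * sq (Dk k))).
    by apply: ler_wpM2r; rewrite ?sq_ge0.
  apply: ler_wpM2l; first by rewrite invr_ge0 ler0n.
  exact: D_bound.
rewrite Hdiff !enorm_sq.
have -> : \sum_(1 <= t < n.+1) enorm (X t - X t.-1) ^+ 2 = \sum_(k < n) sq (X k.+1 - X k).
  by rewrite big_add1 succnK big_mkord; apply: eq_bigr => i _; exact: enorm_sq.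
apply: (le_trans (sq_sub _ _)).
rewrite lerD2l.
have -> : 2 * L ^+ 2 / n.+1%:R * \sum_(k < n) sq (X k.+1 - X k)
   = 2 * ((n.+1%:R)^-1 * \sum_(k < n) L ^+ 2 * sq (X k.+1 - X k)).
  rewrite -mulr_sumr; ring.
rewrite ler_pM2l //; exact: Hb.
Qed.
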